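(* Let $u,v:\mathbb{C}\to\mathbb{R}$ be harmonic, $f=u+iv$, $\mathcal{R}_f=f(\mathbb{C})$, and suppose $\mathcal{D}(\mathcal{R}_f)\subset\{e^{i\theta}: -\pi\le\theta\le0\}$. For $t\in\mathbb{R}$ let $E_t=\{s\in\mathbb{R}: t+is\in\mathcal{R}_f\}$ and $\Phi(t)=\max\{\sup E_t,\,0\}$ (with $\sup\varnothing=-\infty$). Then each $E_t$ is bounded above, so $\Phi:\mathbb{R}\to[0,+\infty)$ is well defined; moreover $\Phi$ is locally bounded and $\lim_{|t|\to\infty}\Phi(t)/|t|=0$.
   Context: $\partial\mathbb{D}$ is the unit circle. For $\mathcal{R}\subset\mathbb{C}$, $e^{i\theta}\in\partial\mathbb{D}$ is an asymptotic direction of $\mathcal{R}$ if there exist $w_n\in\mathcal{R}$ and $\varepsilon_n>0$, $\varepsilon_n\to0$, with $\varepsilon_n w_n\to e^{i\theta}$; $\mathcal{D}(\mathcal{R})$ is the set of asymptotic directions. *)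

(* Defs.v *)
From Stdlib Require Import Reals.
From Coquelicot Require Import Coquelicot.
Open Scope R_scope.

(* The complex plane is identified with R * R (z = x + i y  <->  (x, y)). *)

Definition dx (u : R -> R -> R) : R -> R -> R := fun x y => Derive (fun t => u t y) x.
Definition dy (u : R -> R -> R) : R -> R -> R := fun x y => Derive (fun t => u x t) y.

Definition jcont (w : R -> R -> R) : Prop :=
  forall x y, continuous (fun p : R * R => w (fst p) (snd p)) (x, y).

Definition has_partials (w : R -> R -> R) : Prop :=
  forall x y, ex_derive (fun t => w t y) x /\ ex_derive (fun t => w x t) y.

Definition harmonic (u : R -> R -> R) : Prop :=
  jcont u /\
  has_partials u /\ jcont (dx u) /\ jcont (dy u) /\
  has_partials (dx u) /\ has_partials (dy u) /\
  jcont (dx (dx u)) /\ jcont (dy (dx u)) /\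
  jcont (dx (dy u)) /\ jcont (dy (dy u)) /\
  (forall x y, dx (dx u) x y + dy (dy u) x y = 0).

Definition asymptotic_direction (S : R * R -> Prop) (z : R * R) : Prop :=
  fst z ^ 2 + snd z ^ 2 = 1 /\
  exists (w : nat -> R * R) (eps : nat -> R),
    (forall n, S (w n)) /\ (forall n, 0 < eps n) /\
    is_lim_seq eps 0 /\
    is_lim_seq (fun n => eps n * fst (w n)) (fst z) /\
    is_lim_seq (fun n => eps n * snd (w n)) (snd z).

Definition range_f (u v : R -> R -> R) (p : R * R) : Prop :=
  exists x y, p = (u x y, v x y).

Definition E (u v : R -> R -> R) (t : R) (s : R) : Prop := range_f u v (t, s).

(* Phi(t) = max (sup E_t, 0), sup taken in the extended reals (sup of the
   empty set = -oo).  Once E_t is bounded above this is a real number;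
   the -oo case (E_t empty) gives max(-oo,0) = 0. *)
Definition Phi (u v : R -> R -> R) (t : R) : R :=
  Rmax (match Lub_Rbar (E u v t) with Finite r => r | _ => 0 end) 0.

(* Main.v *)
Require Import Defs.
From Stdlib Require Import Reals Lra Lia IndefiniteDescription Classical.
From Coquelicot Require Import Coquelicot.
Open Scope R_scope.

Lemma inv_S_lim : is_lim_seq (fun k => / INR (S k)) 0.
Proof.
  apply (is_lim_seq_inv (fun k => INR (S k)) p_infty).
  - apply (is_lim_seq_incr_1 INR p_infty), is_lim_seq_INR.
  - easy.
Qed.

Lemma inv_S_pos k : 0 < / INR (S k).
Proof. apply Rinv_0_lt_compat, lt_0_INR; lia. Qed.

Lemma key (u v : R -> R -> R) :
  (forall z, asymptotic_direction (range_f u v) z ->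
     exists theta, - PI <= theta <= 0 /\ z = (cos theta, sin theta)) ->
  forall (t s : nat -> R) K,
  (forall n, range_f u v (t n, s n)) -> (forall n, INR n + 1 <= s n) ->
  (forall n, Rabs (t n) <= K * s n) -> False.
Proof.
  intros H3 t s K Hr Hs Ht.
  assert (spos : forall n, 0 < s n).
  { intro n; pose proof (pos_INR n); pose proof (Hs n); lra. }
  set (q n := t n / s n).
  assert (qb : forall n, Rabs (q n) <= K).
  { intro n; unfold q. unfold Rdiv. rewrite Rabs_mult, Rabs_inv.
    rewrite (Rabs_pos_eq (s n)) by (left; apply spos).
    apply (Rmult_le_reg_r (s n)); [apply spos|].
    rewrite Rmult_assoc, Rinv_l by (apply Rgt_not_eq, spos). rewrite Rmult_1_r. apply Ht. }
  destruct (ex_LimSup_seq q) as [l Hl]. destruct l as [c| |].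
  2: { destruct (Hl K 0%nat) as [n [_ Hn]]. pose proof (qb n).
       pose proof (Rle_abs (q n)); lra. }
  2: { destruct (Hl (-K)) as [N HN]. pose proof (HN N (Nat.le_refl N)).
       pose proof (qb N) as HQ. pose proof (Rle_abs (- q N)) as HR.
       rewrite Rabs_Ropp in HR. lra. }
  assert (cl : forall k, exists n, (k <= n)%nat /\ Rabs (q n - c) < / INR (S k)).
  { intro k. destruct (Hl (mkposreal _ (inv_S_pos k))) as [H1 [N2 H2]].
    destruct (H1 (Nat.max k N2)) as [n [Hn1 Hn2]]. exists n. split; [lia|].
    simpl in *. specialize (H2 n ltac:(lia)). apply Rabs_def1; lra. }
  destruct (functional_choice _ cl) as [f Hf].
  assert (hsq : 0 < 1 + c ^ 2) by nra.
  set (lam := / sqrt (1 + c ^ 2)).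
  assert (lampos : 0 < lam) by (apply Rinv_0_lt_compat, sqrt_lt_R0; lra).
  assert (lam2 : lam ^ 2 * (1 + c ^ 2) = 1).
  { unfold lam. rewrite pow_inv.
    replace (sqrt (1 + c ^ 2) ^ 2) with (1 + c ^ 2).
    field. lra. simpl. rewrite !Rmult_1_r. rewrite sqrt_sqrt; nra. }
  destruct (H3 (lam * c, lam)) as [th [Hth Hz]].
  { split; [simpl; nra|].
    exists (fun k => (t (f k), s (f k))), (fun k => lam / s (f k)).
    split; [intro; apply Hr|]. split.
    { intro k; apply Rdiv_lt_0_compat; auto. }
    split; [|split].
    - apply (is_lim_seq_le_le (fun _ => 0) _ (fun k => lam * / INR (S k))).
      + intro k. destruct (Hf k) as [Hk _]. split.
        * left; apply Rdiv_lt_0_compat; auto.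
        * unfold Rdiv. apply Rmult_le_compat_l; [lra|]. apply Rinv_le_contravar.
          apply lt_0_INR; lia. rewrite S_INR. pose proof (le_INR _ _ Hk).
          pose proof (Hs (f k)); lra.
      + apply is_lim_seq_const.
      + replace (Finite 0) with (Rbar_mult lam 0) by (simpl; f_equal; ring).
        apply is_lim_seq_scal_l, inv_S_lim.
    - simpl. apply (is_lim_seq_ext (fun k => lam * q (f k))).
      { intro k; unfold q; simpl; field. apply Rgt_not_eq, spos. }
      replace (Finite (lam * c)) with (Rbar_mult lam c) by reflexivity.
      apply is_lim_seq_scal_l.
      apply (is_lim_seq_le_le (fun k => c - / INR (S k)) _ (fun k => c + / INR (S k))).
      + intro k. destruct (Hf k) as [_ Hk]. apply Rabs_def2 in Hk. lra.
      + replace (Finite c) with (Finite (c - 0)) by (f_equal; ring).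
        apply is_lim_seq_minus'. apply is_lim_seq_const. apply inv_S_lim.
      + replace (Finite c) with (Finite (c + 0)) by (f_equal; ring).
        apply is_lim_seq_plus'. apply is_lim_seq_const. apply inv_S_lim.
    - simpl. apply (is_lim_seq_ext (fun _ => lam)).
      { intro k; simpl; field. apply Rgt_not_eq, spos. }
      apply is_lim_seq_const. }
  injection Hz as _ Hsin.
  pose proof (sin_ge_0 (- th) ltac:(lra) ltac:(lra)). rewrite sin_neg in H. lra.
Qed.

Lemma phi_big (u v : R -> R -> R) t M : 0 <= M -> M < Phi u v t ->
  exists s, E u v t s /\ M < s.
Proof.
  intros HM HP. apply NNPP. intro Hn.
  assert (ub : is_ub_Rbar (E u v t) M).
  { intros x Hx. simpl. apply Rnot_lt_le. intro; apply Hn; eauto. }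
  pose proof (proj2 (Lub_Rbar_correct (E u v t)) M ub) as Hle.
  unfold Phi in HP. destruct (Lub_Rbar (E u v t)) as [r| |]; simpl in Hle;
  try (rewrite Rmax_left in HP by lra; lra).
  unfold Rmax in HP; destruct (Rle_dec r 0); lra.
Qed.

Theorem lemma6 (u v : R -> R -> R) :
  harmonic u -> harmonic v ->
  (forall z, asymptotic_direction (range_f u v) z ->
     exists theta, - PI <= theta <= 0 /\ z = (cos theta, sin theta)) ->
  (forall t, exists M, forall s, E u v t s -> s <= M) /\
  (forall t, 0 <= Phi u v t) /\
  (forall t0, exists delta M, 0 < delta /\
     forall t, Rabs (t - t0) < delta -> Phi u v t <= M) /\
  (forall eps, 0 < eps -> exists T, forall t, T < Rabs t ->
     Rabs (Phi u v t / Rabs t) < eps).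
Proof.
  intros _ _ H3.
  assert (Hp : forall t, 0 <= Phi u v t) by (intro; unfold Phi; apply Rmax_r).
  split; [|split; [exact Hp|split]].
  - intro t. apply NNPP. intro Hn.
    assert (cl : forall n : nat, exists s, E u v t s /\ INR n + 1 <= s).
    { intro n. apply NNPP. intro Hm. apply Hn. exists (INR n + 1).
      intros s Hs. apply Rnot_lt_le. intro; apply Hm. exists s; split; auto; lra. }
    destruct (functional_choice _ cl) as [f Hf].
    apply (key u v H3 (fun _ => t) f (Rabs t)).
    + intro n; apply Hf.
    + intro n; apply Hf.
    + intro n. destruct (Hf n) as [_ H]. pose proof (pos_INR n).
      pose proof (Rabs_pos t). nra.
  - intro t0. apply NNPP. intro Hn.
    assert (cl : forall n : nat, exists p : R * R,
      E u v (fst p) (snd p) /\ INR n + 1 <= snd p /\ Rabs (fst p - t0) < 1).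
    { intro n. apply NNPP. intro Hm. apply Hn. exists 1, (INR n + 1). split; [lra|].
      intros t Ht. apply Rnot_lt_le. intro HP.
      destruct (phi_big u v t (INR n + 1)) as [s [Hs1 Hs2]]; auto.
      pose proof (pos_INR n); lra.
      apply Hm. exists (t, s). simpl. split; auto. split; auto; lra. }
    destruct (functional_choice _ cl) as [f Hf].
    apply (key u v H3 (fun n => fst (f n)) (fun n => snd (f n)) (Rabs t0 + 1)).
    + intro n; apply Hf.
    + intro n; apply Hf.
    + intro n. destruct (Hf n) as [_ [H1 H2]]. pose proof (pos_INR n).
      pose proof (Rabs_pos t0).
      assert (Rabs (fst (f n)) <= Rabs t0 + 1).
      { replace (fst (f n)) with (t0 + (fst (f n) - t0)) by ring.
        pose proof (Rabs_triang t0 (fst (f n) - t0)). lra. }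
      nra.
  - intros eps He. apply NNPP. intro Hn.
    assert (cl : forall n : nat, exists p : R * R,
      E u v (fst p) (snd p) /\ INR n + 1 <= snd p /\ eps * Rabs (fst p) <= 2 * snd p).
    { intro n. apply NNPP. intro Hm. apply Hn. exists (2 * (INR n + 1) / eps).
      intros t Ht. apply Rnot_le_lt. intro HP.
      pose proof (pos_INR n).
      assert (Tp : 0 < 2 * (INR n + 1) / eps) by (apply Rdiv_lt_0_compat; lra).
      assert (Hta : 0 < Rabs t) by lra.
      assert (HPt : eps * Rabs t <= Phi u v t).
      { rewrite Rabs_pos_eq in HP.
        2: { apply Rmult_le_pos; [apply Hp| left; apply Rinv_0_lt_compat; lra]. }
        apply (Rmult_le_compat_r (Rabs t)) in HP; [|lra].
        unfold Rdiv in HP. rewrite Rmult_assoc, Rinv_l in HP by lra. lra. }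
      assert (Ht2 : 2 * (INR n + 1) < eps * Rabs t).
      { apply (Rmult_lt_compat_l eps) in Ht; [|lra].
        unfold Rdiv in Ht. replace (eps * (2 * (INR n + 1) * / eps)) with (2 * (INR n + 1)) in Ht
          by (field; lra). lra. }
      destruct (phi_big u v t (eps * Rabs t / 2)) as [s [Hs1 Hs2]]; try lra.
      apply Hm. exists (t, s). simpl. split; auto. split; lra. }
    destruct (functional_choice _ cl) as [f Hf].
    apply (key u v H3 (fun n => fst (f n)) (fun n => snd (f n)) (2 / eps)).
    + intro n; apply Hf.
    + intro n; apply Hf.
    + intro n. destruct (Hf n) as [_ [H1 H2]].
      apply (Rmult_le_reg_l eps); [lra|].
      replace (eps * (2 / eps * snd (f n))) with (2 * snd (f n)) by (field; lra). lra.
Qed.
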